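(* Let $q$ be a prime power and $r\ge 0$, $v$ integers. There exists a spanning projective $(r+1)$-cylinder in $\mathrm{PG}(v-1,q)$ if and only if $r+2\le v\le r+q$.
   Context: $\mathrm{PG}(v-1,q)$ is the projective space of $\mathbb{F}_q^v$; a $k$-space is a $k$-dimensional subspace of $\mathbb{F}_q^v$ (points are $1$-spaces, hyperplanes are $(v-1)$-spaces). An $(r+1)$-cylinder is a multiset of $q^{r+1}$ points which arises as the union (counted with multiplicity) of the point sets $L_1\setminus F,\dots,L_q\setminus F$, where $L_1,\dots,L_q$ are $(r+1)$-spaces and $F$ is an $r$-space contained in every $L_i$ (here $L_i\setminus F$ means the set of points of $L_i$ not contained in $F$). The cylinder is called projective if this multiset is a set (no point has multiplicity $>1$), and spanning if its points span $\mathbb{F}_q^v$. *)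

(* Defs.v *)
From HB Require Import structures.
From mathcomp Require Import all_boot all_order all_algebra all_field.
Set Implicit Arguments. Unset Strict Implicit. Unset Printing Implicit Defensive.
Import GRing.Theory.
Local Open Scope ring_scope.

(* PG(v-1,q) is modelled as the lattice of subspaces of F^v = 'rV[F]_v,
   with F a finite field of order q = #|F|.  A k-space is a subspace of
   dimension k; points are 1-spaces. *)

Section Cylinders.
Variables (F : finFieldType) (v : nat).
Local Notation V := 'rV[F]_v.

Definition is_point (P : {vspace V}) : bool := \dim P == 1%N.

(* multiplicity of the point P in the multiset union of the L_i \ Fs *)
Definition cyl_mult (Fs : {vspace V}) (L : 'I_#|F| -> {vspace V})
    (P : {vspace V}) : nat :=
  #|[set i : 'I_#|F| | (P <= L i)%VS && ~~ (P <= Fs)%VS]|.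

Definition is_cylinder (r : nat) (Fs : {vspace V}) (L : 'I_#|F| -> {vspace V})
    : Prop :=
  \dim Fs = r /\ forall i, \dim (L i) = r.+1 /\ (Fs <= L i)%VS.

Definition cyl_projective (Fs : {vspace V}) (L : 'I_#|F| -> {vspace V}) : Prop :=
  forall P, is_point P -> (cyl_mult Fs L P <= 1)%N.

Definition cyl_spanning (Fs : {vspace V}) (L : 'I_#|F| -> {vspace V}) : Prop :=
  forall U : {vspace V},
    (forall P, is_point P -> (0 < cyl_mult Fs L P)%N -> (P <= U)%VS) ->
    U = fullv.

End Cylinders.

(* Main.v *)
Require Import Defs.
From HB Require Import structures.
From mathcomp Require Import all_boot all_order all_algebra all_field.
From mathcomp Require Import zify.
Set Implicit Arguments. Unset Strict Implicit. Unset Printing Implicit Defensive.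
Import GRing.Theory.
Local Open Scope ring_scope.

Section Aux.
Variables (F : finFieldType) (v : nat).
Local Notation V := 'rV[F]_v.

Lemma dimfull : \dim (fullv : {vspace V}) = v.
Proof. rewrite dimvf dim_matrix. exact: mul1n. Qed.

Lemma dim_add_line (U : {vspace V}) x : x \notin U -> \dim (U + <[x]>) = (\dim U).+1.
Proof.
move=> xU.
have x0 : x != 0 by apply: contra xU => /eqP->; rewrite mem0v.
have := dimv_sum_cap U <[x]>; rewrite dim_vline x0.
have -> : \dim (U :&: <[x]>) = 0%N.
  have := dimvS (capvSr U <[x]>); rewrite dim_vline x0.
  case: (\dim _) (dimv_leqif_eq (capvSr U <[x]>)) => // [[|//]] [_].
  rewrite dim_vline x0 eqxx => /esym/eqP HH.
  by case/negP: xU; rewrite memvE -HH capvSl.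
by rewrite addn0 addn1.
Qed.

Definition e (j : nat) : V := \row_k ((k : nat) == j)%:R.
Lemma eE j k : e j 0 k = ((k : nat) == j)%:R.
Proof. by rewrite mxE. Qed.

Definition W n : {vspace V} := (\sum_(0 <= j < n) <[e j]>)%VS.

Lemma W_coord n u : u \in W n -> forall k : 'I_v, (n <= k)%N -> u 0 k = 0.
Proof.
elim: n u => [|n IH] u.
  by rewrite /W big_nil memv0 => /eqP-> k _; rewrite mxE.
rewrite /W big_nat_recr //= => /memv_addP [u1 Hu1 [u2 /vlineP [a ->] ->]] k Hk.
rewrite !mxE (IH u1 Hu1 k (ltnW Hk)) add0r.
by rewrite (gtn_eqF Hk) mulr0.
Qed.

Lemma e_notin n : (n < v)%N -> e n \notin W n.
Proof.
move=> nv; apply/negP => /W_coord /(_ (Ordinal nv) (leqnn _)).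
by rewrite eE eqxx /= => /eqP; rewrite oner_eq0.
Qed.

Lemma dimW n : (n <= v)%N -> \dim (W n) = n.
Proof.
elim: n => [|n IH] nv; first by rewrite /W big_nil dimv0.
by rewrite /W big_nat_recr //= dim_add_line ?IH ?(ltnW nv) // e_notin.
Qed.

Lemma e_in_W j n : (j < n)%N -> e j \in W n.
Proof.
move=> jn; rewrite /W (@big_cat_nat _ _ _ j) /= ?(ltnW jn) //.
apply: subvP (addvSr _ _) _ _; rewrite big_ltn //=.
by apply: subvP (addvSl _ _) _ _; exact: memv_line.
Qed.

Lemma W_sub n (U : {vspace V}) : (forall j, (j < n)%N -> e j \in U) -> (W n <= U)%VS.
Proof.
elim: n => [|n IH] H; first by rewrite /W big_nil sub0v.
rewrite /W big_nat_recr //= subv_add IH; last by move=> j jn; apply: H; exact: ltnW.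
by rewrite -memvE H.
Qed.

Lemma Wfull : W v = fullv.
Proof.
apply/eqP; rewrite eqEdim subvf dimfull dimW //; exact: leqnn.
Qed.


Local Notation q := #|F|.

Lemma q_gt1 : (1 < q)%N.
Proof. exact: card_finNzRing_gt1. Qed.

Lemma fwd_lo r (Fs : {vspace V}) (L : 'I_q -> {vspace V}) :
  is_cylinder r Fs L -> cyl_projective Fs L -> (r + 2 <= v)%N.
Proof.
move=> [dF HL] Hp.
pose i0 : 'I_q := Ordinal (ltnW q_gt1).
pose i1 : 'I_q := Ordinal q_gt1.
have [dL0 _] := HL i0.
have rv : (r.+1 <= v)%N by have := dimvS (subvf (L i0)); rewrite dL0 dimfull.
rewrite leqNgt; apply/negP => vr.
have vE : v = r.+1 by lia.
have Lf i : L i = fullv.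
  have [dL _] := HL i.
  by apply/eqP; rewrite eqEdim subvf dimfull dL vE; exact: leqnn.
case: (boolP [forall j : 'I_v, e j \in Fs]) => [/forallP Hall | ].
  have : (W v <= Fs)%VS.
    by apply: W_sub => j jv; exact: (Hall (Ordinal jv)).
  rewrite Wfull => /dimvS; rewrite dimfull dF; lia.
rewrite negb_forall => /existsP [j Hj].
have ej0 : e j != 0 by apply: contra Hj => /eqP->; rewrite mem0v.
have := Hp <[e j]>%VS; rewrite /is_point dim_vline ej0 => /(_ isT).
rewrite /cyl_mult.
set S := [set _ | _].
have : ([set i0; i1] \subset S).
  apply/subsetP => i _; rewrite inE Lf subvf /= -memvE //.
move/subset_leq_card; rewrite cards2.
have -> : (i0 != i1) by [].
move=> h1 h2; have := leq_trans h1 h2; by [].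
Qed.

Lemma dim_sum_seq r (Fs : {vspace V}) (L : 'I_q -> {vspace V}) (s : seq 'I_q) :
  is_cylinder r Fs L -> (\dim (Fs + \sum_(i <- s) L i) <= r + size s)%N.
Proof.
move=> [dF HL]; elim: s => [|i s IH].
  by rewrite big_nil addv0 dF addn0.
rewrite big_cons addvA (addvC Fs) -addvA.
have [dL sFL] := HL i.
have := dimv_sum_cap (L i) (Fs + \sum_(j <- s) L j).
have : (Fs <= L i :&: (Fs + \sum_(j <- s) L j))%VS by rewrite subv_cap sFL addvSl.
move/dimvS; rewrite dF dL /= => h1 h2.
have K : forall a b d : nat,
  (r <= b)%N -> (a + b = r.+1 + d)%N -> (d <= r + size s)%N -> (a <= r + (size s).+1)%N.
  move=> a b d; lia.
exact: K h1 h2 IH.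
Qed.

Lemma fwd_hi r (Fs : {vspace V}) (L : 'I_q -> {vspace V}) :
  is_cylinder r Fs L -> cyl_spanning Fs L -> (v <= r + q)%N.
Proof.
move=> Hc Hs.
have := dim_sum_seq (enum 'I_q) Hc; rewrite size_enum_ord.
have -> : (\sum_(i <- enum 'I_q) L i)%VS = fullv.
  apply: Hs => P _ /card_gt0P [i]; rewrite inE => /andP [PL _].
  rewrite (big_rem i) ?mem_enum //=.
  exact: subv_trans PL (addvSl _ _).
have -> : (Fs + fullv)%VS = fullv by apply/eqP; rewrite eqEsubv subvf addvSr.
by rewrite dimfull.
Qed.

Section Construction.
Variable r : nat.
Hypothesis Hr : (r + 2 <= v <= r + q)%N.

Definition c (i : 'I_q) : F := enum_val i.
Definition x (i : 'I_q) : V :=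
  if (0 < i < v - r)%N then e (r + i) else e r + c i *: e (r + 1).
Definition Lc (i : 'I_q) : {vspace V} := (W r + <[x i]>)%VS.

Lemma xE i (k : 'I_v) : x i 0 k =
  if (0 < i < v - r)%N then ((k : nat) == r + i)%:R
  else ((k : nat) == r)%:R + c i * ((k : nat) == r + 1)%:R.
Proof. by rewrite /x; case: ifP => _; rewrite !mxE. Qed.

Lemma rv : (r < v)%N. Proof. lia. Qed.
Lemma r1v : (r + 1 < v)%N. Proof. lia. Qed.

Lemma x_notinW i : x i \notin W r.
Proof.
apply/negP => /W_coord H.
case Hi: (0 < i < v - r)%N.
  have kv : (r + i < v)%N by lia.
  have := H (Ordinal kv); rewrite xE Hi /= eqxx => /(_ (leq_addr _ _)) /eqP.
  by rewrite oner_eq0.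
have := H (Ordinal rv); rewrite xE Hi /= eqxx => /(_ (leqnn _)).
have -> : (r == r + 1)%N = false by lia.
by rewrite mulr0 addr0 => /eqP; rewrite oner_eq0.
Qed.

Lemma x_notin i j : i != j -> x j \notin Lc i.
Proof.
move=> ij; apply/negP => /memv_addP [f /W_coord Hf [y /vlineP [a ->] Hx]].
have h (k : 'I_v) : (r <= k)%N -> x j 0 k = a * x i 0 k.
  by move=> rk; rewrite Hx !mxE Hf // add0r.
have hr := h (Ordinal rv) (leqnn _).
have hr1 := h (Ordinal r1v) (leq_addr _ _).
rewrite !xE /= eqxx in hr hr1.
have E1 : (r == r + 1)%N = false by lia.
have E2 : (r + 1 == r)%N = false by lia.
rewrite E1 in hr; rewrite E2 in hr1.
rewrite eqxx in hr1.
case Hi: (0 < i < v - r)%N; case Hj: (0 < j < v - r)%N; rewrite ?Hi ?Hj in hr hr1.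
- have kv : (r + j < v)%N by lia.
  have := h (Ordinal kv) (leq_addr _ _); rewrite !xE Hi Hj /= eqxx.
  have -> : (r + j == r + i)%N = false.
    apply/negP => /eqP Hij; case/negP: ij; apply/eqP; apply: ord_inj; lia.
  by rewrite mulr0 => /eqP; rewrite oner_eq0.
- have E3 : (r == r + i)%N = false by lia.
  rewrite E3 in hr.
  by move: hr; rewrite mulr0 mulr0 addr0 => /eqP; rewrite oner_eq0.
- have E3 : (r == r + j)%N = false by lia.
  rewrite E3 in hr.
  move: hr; rewrite mulr0 addr0 mulr1 => a0.
  have kv : (r + j < v)%N by lia.
  have := h (Ordinal kv) (leq_addr _ _); rewrite !xE Hi Hj /= eqxx -a0 mul0r.
  by move/eqP; rewrite oner_eq0.
- move: hr hr1 => /=; rewrite ?(mulr1n, mulr0n, mulr0, mulr1, addr0, add0r) => <-.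
  rewrite mul1r => /enum_val_inj Hij.
  by rewrite Hij eqxx in ij.
Qed.

Lemma dimW_r : \dim (W r) = r.
Proof. apply: dimW; lia. Qed.

Lemma cyl_ok : is_cylinder r (W r) Lc.
Proof.
split; first exact: dimW_r.
move=> i; split; last exact: addvSl.
by rewrite /Lc dim_add_line ?x_notinW // dimW_r.
Qed.

Lemma eqL i (P : {vspace V}) : (P <= Lc i)%VS -> ~~ (P <= W r)%VS ->
  Lc i = (W r + P)%VS.
Proof.
move=> PL PW.
have s1 : (W r + P <= Lc i)%VS by rewrite subv_add addvSl PL.
have [le1 eq1] := dimv_leqif_sup (addvSl (W r) P).
have : (\dim (W r) < \dim (W r + P))%N.
  rewrite ltn_neqAle le1 andbT eq1 subv_add subvv /=; exact: PW.
rewrite dimW_r => lt1.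
apply/esym/eqP; rewrite eqEdim s1 /=.
by rewrite /Lc dim_add_line ?x_notinW // dimW_r.
Qed.

Lemma proj_ok : cyl_projective (W r) Lc.
Proof.
move=> P _; rewrite leqNgt; apply/negP => /card_gt1P [i [j [Hi Hj ij]]].
move: Hi Hj; rewrite !inE => /andP [Pi PW] /andP [Pj _].
have E : Lc i = Lc j by rewrite (eqL Pi PW) (eqL Pj PW).
have := x_notin ij; rewrite E /Lc.
by rewrite memvE addvSr.
Qed.

Lemma span_ok : cyl_spanning (W r) Lc.
Proof.
move=> U HU.
have S1 i y : y \in Lc i -> y \notin W r -> y \in U.
  move=> yL yW.
  have y0 : y != 0 by apply: contra yW => /eqP->; rewrite mem0v.
  rewrite memvE; apply: HU; first by rewrite /is_point dim_vline y0.
  apply/card_gt0P; exists i; rewrite inE -!memvE yL; exact: yW.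
have xL i : x i \in Lc i by rewrite /Lc memvE addvSr.
have S2 i : x i \in U by apply: S1 (xL i) (x_notinW i).
pose i0 : 'I_q := Ordinal (ltnW q_gt1).
have S3 f : f \in W r -> f \in U.
  move=> fW.
  have : f + x i0 \in U.
    apply: (S1 i0); first by apply: memvD (xL i0); apply: (subvP (addvSl _ _)).
    apply/negP => H; case/negP: (x_notinW i0).
    by rewrite -(addKr f (x i0)) memvD ?memvN.
  by move=> H; rewrite -(addrK (x i0) f) memvB.
have S4 j : (j < v)%N -> e j \in U.
  move=> jv.
  case: (ltngtP j r) => [jr|rj|->].
  - by apply: S3; exact: e_in_W.
  - have mq : (j - r < q)%N by lia.
    have := S2 (Ordinal mq); rewrite /x /=.
    have -> : (0 < j - r < v - r)%N by lia.
    by have -> : (r + (j - r) = j)%N by lia.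
  - have i1q : (1 < q)%N := q_gt1.
    have := S2 (Ordinal i1q); rewrite /x /=.
    have -> : (1 < v - r)%N by lia.
    move=> H1.
    have := S2 i0; rewrite /x /= => H0.
    by rewrite -(addrK (c i0 *: e (r + 1)) (e r)) memvB // memvZ.
apply/eqP; rewrite eqEsubv subvf /= -Wfull.
exact: W_sub.
Qed.

End Construction.

End Aux.

Theorem mainTheorem1 (F : finFieldType) (r v : nat) :
  (exists (Fs : {vspace 'rV[F]_v}) (L : 'I_#|F| -> {vspace 'rV[F]_v}),
      is_cylinder r Fs L /\ cyl_projective Fs L /\ cyl_spanning Fs L)
  <-> (r + 2 <= v <= r + #|F|)%N.
Proof.
split.
  move=> [Fs [L [Hc [Hp Hs]]]].
  by rewrite (fwd_lo Hc Hp) (fwd_hi Hc Hs).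
move=> Hr; exists (@W F v r), (@Lc F v r).
split; first exact: (cyl_ok Hr).
split; [exact: (proj_ok Hr) | exact: (span_ok Hr)].
Qed.
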